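(* In the setting of the context, let $p>L$ and $\alpha>0$, and set $\sigma_2=\frac{2(p+L)}{p-L}$. For every $y\in Y$ and $z\in\mathbb{R}^n$, $$\alpha(p-L)\|x^*(z)-x(y_+(z),z)\|^2\le(1+\alpha L+\alpha L\sigma_2)\|y-y_+(z)\|\cdot\mathrm{dist}(y_+(z),Y(z))\le(1+\alpha L+\alpha L\sigma_2)\|y-y_+(z)\|\cdot D(Y),$$ where $D(Y)$ is the diameter of $Y$.
   Context: $X\subseteq\mathbb{R}^n$ nonempty closed convex, $Y\subseteq\mathbb{R}^m$ nonempty closed convex compact, $f$ continuously differentiable with $f(x,\cdot)$ concave for each $x$, $\nabla_xf$ and $\nabla_yf$ $L$-Lipschitz, $\max_{y\in Y}f(x,y)$ bounded below. $P_Y$ is Euclidean projection and $\mathrm{dist}$ Euclidean distance to a set. $K(x,z;y)=f(x,y)+\frac p2\|x-z\|^2$; $x(y,z)=\arg\min_{x\in X}K(x,z;y)$; $d(y,z)=\min_{x\in X}K(x,z;y)$; $Y(z)=\arg\max_{y\in Y}d(y,z)$; $x^*(z)=\arg\min_{x\in X}\max_{y\in Y}K(x,z;y)$; $y_+(z)=P_Y\big(y+\alpha\nabla_yK(x(y,z),z;y)\big)$ (depending on $y$). *)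

(* Defs.v *)
From HB Require Import structures.
From mathcomp Require Import all_boot all_order all_algebra.
From mathcomp Require Import all_classical all_reals topology normedtype.
Set Implicit Arguments. Unset Strict Implicit. Unset Printing Implicit Defensive.
Import Order.TTheory GRing.Theory Num.Theory.
Import numFieldTopology.Exports numFieldNormedType.Exports.
Local Open Scope classical_set_scope.
Local Open Scope ring_scope.

Section Defs.
Variable R : realType.

Definition dotv k (u v : 'rV[R]_k) : R := \sum_(i < k) u ord0 i * v ord0 i.
Definition enorm k (u : 'rV[R]_k) : R := Num.sqrt (dotv u u).

Definition set_dist k (v : 'rV[R]_k) (S : set 'rV[R]_k) : R :=
  inf [set enorm (v - w) | w in S].

Definition set_diam k (S : set 'rV[R]_k) : R :=
  sup [set r : R | exists a b, [/\ S a, S b & r = enorm (a - b)]].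

Definition convex_set k (S : set 'rV[R]_k) : Prop :=
  forall a b, S a -> S b -> forall t : R, 0 <= t <= 1 ->
    S (t *: a + (1 - t) *: b).

Definition concave_on k (S : set 'rV[R]_k) (h : 'rV[R]_k -> R) : Prop :=
  forall a b, S a -> S b -> forall t : R, 0 <= t <= 1 ->
    t * h a + (1 - t) * h b <= h (t *: a + (1 - t) *: b).

Definition is_grad k (h : 'rV[R]_k -> R) (x g : 'rV[R]_k) : Prop :=
  forall e : R, 0 < e -> exists2 del : R, 0 < del &
    forall d, enorm d < del -> `|h (x + d) - h x - dotv g d| <= e * enorm d.

(* Euclidean projection onto S (characterization; unique for S closed convex nonempty) *)
Definition is_proj k (S : set 'rV[R]_k) (P : 'rV[R]_k -> 'rV[R]_k) : Prop :=
  forall v, S (P v) /\ forall w, S w -> enorm (v - P v) <= enorm (v - w).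

End Defs.

(* Main.v *)
Require Import Defs.
From HB Require Import structures.
From mathcomp Require Import all_boot all_order all_algebra.
From mathcomp Require Import all_classical all_reals topology normedtype.
From mathcomp Require Import derive realfun.
From mathcomp Require Import ring lra.
Import Order.TTheory GRing.Theory Num.Theory.
Import numFieldTopology.Exports numFieldNormedType.Exports.
Local Open Scope classical_set_scope.
Local Open Scope ring_scope.

Set Implicit Arguments. Unset Strict Implicit.


Section Basic.
Variable R : realType.
Variable k : nat.
Implicit Types u v w : 'rV[R]_k.

Lemma dotvC u v : dotv u v = dotv v u.
Proof. by apply: eq_bigr => i _; rewrite mulrC. Qed.

Lemma dotvDl u v w : dotv (u + v) w = dotv u w + dotv v w.
Proof. by rewrite /dotv -big_split; apply: eq_bigr => i _; rewrite mxE mulrDl. Qed.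

Lemma dotvDr u v w : dotv w (u + v) = dotv w u + dotv w v.
Proof. by rewrite dotvC dotvDl !(dotvC w). Qed.

Lemma dotvZl (c : R) u v : dotv (c *: u) v = c * dotv u v.
Proof. by rewrite /dotv mulr_sumr; apply: eq_bigr => i _; rewrite mxE mulrA. Qed.

Lemma dotvZr (c : R) u v : dotv u (c *: v) = c * dotv u v.
Proof. by rewrite dotvC dotvZl dotvC. Qed.

Lemma dotvNl u v : dotv (- u) v = - dotv u v.
Proof. by rewrite -scaleN1r dotvZl mulN1r. Qed.

Lemma dotvNr u v : dotv u (- v) = - dotv u v.
Proof. by rewrite dotvC dotvNl dotvC. Qed.

Lemma dotvBl u v w : dotv (u - v) w = dotv u w - dotv v w.
Proof. by rewrite dotvDl dotvNl. Qed.

Lemma dotvBr u v w : dotv w (u - v) = dotv w u - dotv w v.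
Proof. by rewrite dotvDr dotvNr. Qed.

Lemma dotv0l v : dotv 0 v = 0.
Proof. by rewrite /dotv big1 // => i _; rewrite mxE mul0r. Qed.

Lemma dotv_ge0 u : 0 <= dotv u u.
Proof. by apply: sumr_ge0 => i _; rewrite -expr2 sqr_ge0. Qed.

Lemma enorm_ge0 u : 0 <= enorm u.
Proof. exact: sqrtr_ge0. Qed.

Lemma enorm_sq u : enorm u ^+ 2 = dotv u u.
Proof. by rewrite /enorm sqr_sqrtr // dotv_ge0. Qed.

Lemma dotv_eq0 u : dotv u u = 0 -> u = 0.
Proof.
move=> /eqP; rewrite /dotv psumr_eq0; last by move=> i _; rewrite -expr2 sqr_ge0.
move=> /allP H; apply/rowP => i; rewrite mxE.
have := H i (mem_index_enum _); rewrite /= mulf_eq0 orbb => /eqP //.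
Qed.

Lemma enorm_eq0 u : enorm u = 0 -> u = 0.
Proof. by move=> h; apply: dotv_eq0; rewrite -enorm_sq h expr0n. Qed.

Lemma enorm0 : enorm (0 : 'rV[R]_k) = 0.
Proof. by rewrite /enorm dotv0l sqrtr0. Qed.

Lemma enormZ (c : R) u : enorm (c *: u) = `|c| * enorm u.
Proof.
by rewrite /enorm dotvZl dotvZr mulrA -expr2 sqrtrM ?sqr_ge0 // sqrtr_sqr.
Qed.

Lemma enormN u : enorm (- u) = enorm u.
Proof. by rewrite -scaleN1r enormZ normrN normr1 mul1r. Qed.

Lemma enormB u v : enorm (u - v) = enorm (v - u).
Proof. by rewrite -enormN opprB. Qed.

Lemma cs_aux u v : dotv u v * (enorm u * enorm v) <= enorm u ^+ 2 * enorm v ^+ 2.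
Proof.
set a := enorm u; set b := enorm v.
have H : forall i : 'I_k, 2 * (u ord0 i * v ord0 i) * (a * b)
      <= (u ord0 i) ^+ 2 * b ^+ 2 + (v ord0 i) ^+ 2 * a ^+ 2.
  move=> i; have := sqr_ge0 (u ord0 i * b - v ord0 i * a); lra.
have : \sum_(i < k) (2 * (u ord0 i * v ord0 i) * (a * b)) <= \sum_(i < k) ((u ord0 i) ^+ 2 * b ^+ 2 + (v ord0 i) ^+ 2 * a ^+ 2).
  by apply: ler_sum => i _; exact: H.
have E1 : \sum_(i < k) u ord0 i ^+ 2 = a ^+ 2 by rewrite enorm_sq; apply: eq_bigr => i _; rewrite expr2.
have E2 : \sum_(i < k) v ord0 i ^+ 2 = b ^+ 2 by rewrite enorm_sq; apply: eq_bigr => i _; rewrite expr2.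
have E3 : \sum_(i < k) (2 * (u ord0 i * v ord0 i) * (a * b)) = 2 * dotv u v * (a * b).
  by rewrite -mulr_suml -mulr_sumr.
rewrite E3 big_split /= -!mulr_suml E1 E2 => h.
have : 2 * (dotv u v * (a * b)) <= 2 * (a ^+ 2 * b ^+ 2) by lra.
by rewrite ler_pM2l.
Qed.

Lemma cs u v : dotv u v <= enorm u * enorm v.
Proof.
have [u0|] := eqVneq (enorm u) 0.
  by rewrite (enorm_eq0 u0) dotv0l enorm0 mul0r.
have [v0|] := eqVneq (enorm v) 0.
  by rewrite (enorm_eq0 v0) dotvC dotv0l enorm0 mulr0.
move=> vn0 un0.
have p : 0 < enorm u * enorm v.
  by rewrite mulr_gt0 // lt_def ?un0 ?vn0 enorm_ge0.
have := cs_aux u v; rewrite -exprMn expr2 ler_pM2r //.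
Qed.

Lemma cs_abs u v : `|dotv u v| <= enorm u * enorm v.
Proof.
rewrite ler_norml cs andbT; have := cs (- u) v.
by rewrite dotvNl enormN lerNl.
Qed.

Lemma enormD u v : enorm (u + v) <= enorm u + enorm v.
Proof.
rewrite -(ler_pXn2r (_ : 0 < 2)%N) ?nnegrE ?addr_ge0 ?enorm_ge0 //.
rewrite enorm_sq dotvDl !dotvDr -!enorm_sq (dotvC v u).
have := cs u v; have := enorm_ge0 u; have := enorm_ge0 v; nra.
Qed.

Lemma enorm_sqD u v : enorm (u + v) ^+ 2 = enorm u ^+ 2 + 2 * dotv u v + enorm v ^+ 2.
Proof. by rewrite !enorm_sq dotvDl !dotvDr (dotvC v u); ring. Qed.

Lemma enorm_sqB u v : enorm (u - v) ^+ 2 = enorm u ^+ 2 - 2 * dotv u v + enorm v ^+ 2.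
Proof. by rewrite enorm_sqD dotvNr enormN; ring. Qed.

End Basic.



Section An.
Variable R : realType.

Lemma small_le0 (a c : R) : (forall t, 0 < t -> t < 1 -> a <= t * c) -> a <= 0.
Proof.
move=> H; case: (lerP a 0) => // ha; exfalso.
have hc := ler_norm c; have hc0 := normr_ge0 c.
set d := a + `|c| + 1.
have hd : 0 < d by rewrite /d; lra.
set t := a / d.
have td : t * d = a by rewrite /t mulrVK // unitfE gt_eqF.
have t0 : 0 < t by rewrite /t divr_gt0.
have t1 : t < 1 by rewrite /t ltr_pdivrMr // mul1r /d; lra.
have := H t t0 t1; rewrite /d in td; nra.
Qed.

Lemma mvt_ndecr (u D : R -> R) :
  (forall t e, 0 < e -> exists2 d, 0 < d & forall s, `|s| < d ->
      `|u (t + s) - u t - s * D t| <= e * `|s|) ->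
  (forall t, 0 <= t <= 1 -> 0 <= D t) -> u 0 <= u 1.
Proof.
move=> Hd HD.
have cv : forall t, (fun h : R => h^-1 *: ((u \o shift t) (h *: 1) - u t)) @ 0^' --> D t.
  move=> t; apply/cvgrPdist_le => e e0.
  have [d d0 Hs] := Hd t e e0.
  near=> h.
  have hn0 : h != 0 by near: h; exact: nbhs_dnbhs_neq.
  have hd : `|h| < d by near: h; exact: dnbhs0_lt.
  rewrite /= /shift /= [h%:A]mulr1 (addrC h t).
  change (`|D t - h^-1 * (u (t + h) - u t)| <= e).
  have -> : D t - h^-1 * (u (t + h) - u t) = - (h^-1 * (u (t + h) - u t - h * D t)).
    by field.
  rewrite normrN normrM normfV mulrC ler_pdivrMr ?normr_gt0 //; exact: Hs.
have der : forall t : R, is_derive t (1 : R) u (D t).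
  move=> t; split; first by apply/cvg_ex; exists (D t); exact: cv.
  exact: cvg_lim (cv t).
have cont : continuous u.
  move=> t; have [dv _] := der t; apply: differentiable_continuous.
  exact/derivable1_diffP.
have [c c01 E] := @MVT R u D 0 1 ltr01 (fun x _ => der x) (continuous_subspaceT cont).
rewrite -subr_ge0 E mulr_ge0 // ?subr_ge0 //; apply: HD.
by move: c01; rewrite in_itv /= => /andP[/ltW -> /ltW ->].
Unshelve. all: end_near.
Qed.

End An.



Section Grad.
Variable R : realType.
Variable k : nat.
Implicit Types u v w x y : 'rV[R]_k.

Lemma grad_dir (h : 'rV[R]_k -> R) x G v e : is_grad h x G -> 0 < e ->
  exists2 t0, 0 < t0 & forall t, 0 < t -> t <= t0 ->
    `|h (x + t *: v) - h x - t * dotv G v| <= e * t * enorm v.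
Proof.
move=> H e0; have [del d0 Hd] := H e e0.
have nv := enorm_ge0 v.
have hp : 0 < enorm v + 1 by rewrite ltr_wpDl.
exists (del / (2 * (enorm v + 1))).
  by rewrite divr_gt0 // mulr_gt0.
move=> t t0 tle.
have tn : enorm (t *: v) = t * enorm v by rewrite enormZ ger0_norm // ltW.
have : enorm (t *: v) < del.
  rewrite tn; apply: (le_lt_trans (y := del / (2 * (enorm v + 1)) * enorm v)).
    by rewrite ler_wpM2r.
  set X := del / (2 * (enorm v + 1)).
  have HX : X * (2 * (enorm v + 1)) = del.
    by rewrite /X divfK // gt_eqF // mulr_gt0.
  have X0 : 0 < X by rewrite /X divr_gt0 // mulr_gt0.
  nra.
move=> /Hd; rewrite dotvZr tn mulrA //.
Qed.

Lemma vec_seg (t : R) u v : t *: u + (1 - t) *: v = v + t *: (u - v).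
Proof. by apply/rowP => i; rewrite !mxE; ring. Qed.

Lemma concave_tangent (h : 'rV[R]_k -> R) y y' G :
  concave_on setT h -> is_grad h y G -> h y' <= h y + dotv G (y' - y).
Proof.
move=> hc hg; rewrite -subr_ge0.
set v := y' - y.
suff : h y' - h y - dotv G v <= 0 by lra.
apply: (@small_le0 _ _ (enorm v)) => e e0 e1.
have [t0 t00 Ht] := grad_dir v hg e0.
set t := Num.min t0 1.
have tp : 0 < t by rewrite lt_min t00 ltr01.
have tt0 : t <= t0 by rewrite ge_min lexx.
have t1 : t <= 1 by rewrite ge_min lexx orbT.
have := hc y' y I I t; rewrite (ltW tp) t1 => /(_ isT).
rewrite vec_seg -/v => hcc.
have := Ht t tp tt0; rewrite ler_norml => /andP[_ hb].
have : t * (h y' - h y - dotv G v) <= t * (e * enorm v) by nra.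
by rewrite ler_pM2l.
Qed.

Lemma alg1 (A B C b c t s : R) : A - b*(t+s) - c*(t+s)^+2/2 - (B - b*t - c*t^+2/2) - s*(C - b - c*t) = A - B - s*C - c*s^+2/2.
Proof. by field. Qed.

Lemma seg_lemma (h : 'rV[R]_k -> R) (G : 'rV[R]_k -> 'rV[R]_k) a v (b c : R) :
  (forall x, is_grad h x (G x)) ->
  (forall t, 0 <= t <= 1 -> b + c * t <= dotv (G (a + t *: v)) v) ->
  h a + b + c / 2 <= h (a + v).
Proof.
move=> hg hb.
pose u t := h (a + t *: v) - b * t - c * t ^+ 2 / 2.
pose D t := dotv (G (a + t *: v)) v - b - c * t.
have := @mvt_ndecr R u D.
have -> : u 0 = h a by rewrite /u scale0r addr0; ring.
have -> : u 1 = h (a + v) - b - c / 2 by rewrite /u scale1r; ring.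
move=> H; suff : h a <= h (a + v) - b - c / 2 by lra.
apply: H; last by move=> t /hb; rewrite /D; lra.
move=> t e e0.
have nv := enorm_ge0 v; have nc := normr_ge0 c.
have hv : 0 < enorm v + 1 by lra.
have hcp : 0 < `|c| + 1 by lra.
have e'0 : 0 < e / 2 / (enorm v + 1) by rewrite !divr_gt0.
have [del d0 Hd] := hg (a + t *: v) _ e'0.
exists (Num.min (del / (enorm v + 1)) (e / (`|c| + 1))).
  by rewrite lt_min !divr_gt0.
move=> s; rewrite lt_min => /andP[s1 s2].
have E : a + (t + s) *: v = (a + t *: v) + s *: v.
  by apply/rowP => i; rewrite !mxE; ring.
have ns : enorm (s *: v) = `|s| * enorm v by rewrite enormZ.
have hs : enorm (s *: v) < del.
  rewrite ns; move: s1; rewrite ltr_pdivlMr // => s1.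
  have := normr_ge0 s; nra.
have := Hd _ hs; rewrite dotvZr ns => Hs.
have -> : u (t + s) - u t - s * D t =
   (h (a + t *: v + s *: v) - h (a + t *: v) - s * dotv (G (a + t *: v)) v)
   - c * s ^+ 2 / 2. rewrite /u /D /= E. exact: alg1.
have e1 : e / 2 / (enorm v + 1) * (enorm v + 1) = e / 2.
  by rewrite mulrVK // unitfE gt_eqF.
have sn := normr_ge0 s.
have B1 : e / 2 / (enorm v + 1) * (`|s| * enorm v) <= e / 2 * `|s|.
  move: e'0 e1; set K := e / 2 / (enorm v + 1) => K0 e1; rewrite -e1; nra.
have B2 : `|c * s ^+ 2 / 2| <= e / 2 * `|s|.
  move: s2; rewrite ltr_pdivlMr // => s2.
  have h1 : `|c| * `|s| <= e by nra.
  have h2 : `|c| * (`|s| * `|s|) <= e * `|s| by nra.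
  have h3 : s ^+ 2 = `|s| * `|s| by rewrite -normrM -expr2 ger0_norm // sqr_ge0.
  have h4 := ler_norm c; have h5 : - c <= `|c| by rewrite -normrN ler_norm.
  rewrite ler_norml h3; apply/andP; split; nra.
apply: le_trans (ler_normB _ _) _.
lra.
Qed.

End Grad.



Section Gen.
Variable R : realType.
Variable k : nat.

Lemma is_gradB (h1 h2 : 'rV[R]_k -> R) x G1 G2 :
  is_grad h1 x G1 -> is_grad h2 x G2 -> is_grad (fun x => h1 x - h2 x) x (G1 - G2).
Proof.
move=> H1 H2 e e0.
have e2 : 0 < e / 2 by rewrite divr_gt0.
have [d1 d10 Hd1] := H1 _ e2; have [d2 d20 Hd2] := H2 _ e2.
exists (Num.min d1 d2); first by rewrite lt_min d10 d20.
move=> d; rewrite lt_min => /andP[l1 l2].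
have A1 := Hd1 d l1; have A2 := Hd2 d l2.
rewrite dotvBl.
have -> : h1 (x + d) - h2 (x + d) - (h1 x - h2 x) - (dotv G1 d - dotv G2 d)
  = (h1 (x + d) - h1 x - dotv G1 d) - (h2 (x + d) - h2 x - dotv G2 d) by ring.
apply: le_trans (ler_normB _ _) _; lra.
Qed.

Lemma quad_id (t : R) (a b : 'rV[R]_k) :
  enorm (t *: a + (1 - t) *: b) ^+ 2
  = t * enorm a ^+ 2 + (1 - t) * enorm b ^+ 2 - t * (1 - t) * enorm (a - b) ^+ 2.
Proof.
rewrite !enorm_sq /dotv !mulr_sumr -big_split -sumrB /=.
by apply: eq_bigr => i _; rewrite !mxE; ring.
Qed.

Lemma dot_lb (u v : 'rV[R]_k) : - (enorm u * enorm v) <= dotv u v.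
Proof. by have := cs_abs u v; rewrite ler_norml => /andP[]. Qed.

Lemma nearn (y0 : 'rV[R]_k) (e : R) : 0 < e -> \forall y \near y0, `|y0 - y| < e.
Proof. move=> e0. have := @cvgrPdist_lt _ _ _ (nbhs y0) _ (fun y => y) y0.
move=> [+ _]. move=> /(_ cvg_id). apply. exact: e0. Qed.

Lemma coordle (v : 'rV[R]_k) i : `|v ord0 i| <= `|v|.
Proof.
have /mapP[j Hj ->] : `|v ord0 i| \in [seq `|v x.1 x.2| | x : 'I_1 * 'I_k].
  by apply/mapP; exists (ord0, i) => //=; rewrite mem_enum.
by rewrite [leRHS]/Num.norm /= mx_normrE; apply/bigmax_geP; right => /=; exists j.
Qed.

Lemma enorm_le_norm (v : 'rV[R]_k) : enorm v <= k.+1%:R * `|v|.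
Proof.
have nv := normr_ge0 v.
rewrite -(ler_pXn2r (_ : 0 < 2)%N) ?nnegrE ?enorm_ge0 ?mulr_ge0 ?ler0n //.
rewrite enorm_sq.
have : dotv v v <= \sum_(i < k) `|v| ^+ 2.
  apply: ler_sum => i _; rewrite -expr2 -(real_normK (num_real _)).
  rewrite lerXn2r ?nnegrE ?normr_ge0 //; exact: coordle.
rewrite sumr_const card_ord => h; apply: le_trans h _.
rewrite exprMn -[_ *+ k]mulr_natl; apply: ler_wpM2r; first exact: sqr_ge0.
rewrite -natrX ler_nat; apply: leq_trans (leqnSn _) _.
by rewrite expnS leq_pmulr // expn_gt0.
Qed.

Lemma proj_vi (S : set 'rV[R]_k) P : convex_set S -> is_proj S P ->
  forall v w, S w -> dotv (v - P v) (w - P v) <= 0.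
Proof.
move=> cS hP v w Sw.
set q := P v; set a := v - q; set b := w - q.
have Sq : S q by exact: (hP v).1.
have nb := enorm_ge0 b.
suff : dotv a b - 0 <= 0 by rewrite subr0.
apply: (@small_le0 _ _ (enorm b ^+ 2 / 2)) => t t0 t1.
have Sw' : S (t *: w + (1 - t) *: q) by apply: cS => //; rewrite (ltW t0) (ltW t1).
have h := (hP v).2 _ Sw'.
have E : v - (t *: w + (1 - t) *: q) = a - t *: b by apply/rowP => i; rewrite !mxE; ring.
rewrite E -/q -/a in h.
have h2 : enorm a ^+ 2 <= enorm (a - t *: b) ^+ 2.
  by rewrite lerXn2r ?nnegrE ?enorm_ge0.
rewrite (enorm_sqB a (t *: b)) dotvZr enormZ ger0_norm ?(ltW t0) // in h2.
have : t * (2 * dotv a b) <= t * (t * enorm b ^+ 2) by nra.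
rewrite ler_pM2l // => h3; rewrite subr0; lra.
Qed.

Lemma enorm_cont : continuous (fun v : 'rV[R]_k => enorm v).
Proof.
move=> v0; apply/(@cvgrPdist_le _ _ _ (nbhs v0)) => e e0.
have dm0 : 0 < e / k.+1%:R by rewrite divr_gt0.
near=> v.
have hy : `|v0 - v| < e / k.+1%:R by near: v; exact: nearn.
have hn : enorm (v - v0) < e.
  apply: le_lt_trans (enorm_le_norm _) _.
  by rewrite -ltr_pdivlMl // mulrC -normrN opprB.
have h1 : enorm v <= enorm v0 + enorm (v - v0).
  by have := enormD v0 (v - v0); rewrite addrC subrK.
have h2 : enorm v0 <= enorm v + enorm (v - v0).
  by have := enormD v (v0 - v); rewrite addrC subrK enormB.
rewrite ler_norml; apply/andP; split; lra.
Unshelve. all: end_near.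
Qed.

End Gen.



Section Prob.
Variables (R : realType) (n m : nat) (X : set 'rV[R]_n) (Y : set 'rV[R]_m)
  (f : 'rV[R]_n -> 'rV[R]_m -> R)
  (gx : 'rV[R]_n -> 'rV[R]_m -> 'rV[R]_n)
  (gy : 'rV[R]_n -> 'rV[R]_m -> 'rV[R]_m)
  (L p : R).
Hypothesis hXcv : convex_set X.
Hypothesis hgx : forall x y, is_grad (fun x' => f x' y) x (gx x y).
Hypothesis hgy : forall x y, is_grad (fun y' => f x y') y (gy x y).
Hypothesis hconc : forall x, concave_on setT (f x).
Hypothesis hLx1 : forall x x' y, enorm (gx x y - gx x' y) <= L * enorm (x - x').
Hypothesis hLx2 : forall x y y', enorm (gx x y - gx x y') <= L * enorm (y - y').
Hypothesis hLy1 : forall x x' y, enorm (gy x y - gy x' y) <= L * enorm (x - x').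
Hypothesis hLy2 : forall x y y', enorm (gy x y - gy x y') <= L * enorm (y - y').
Hypothesis hpL : L < p.
Hypothesis hL0 : 0 <= L.
Variable xf : 'rV[R]_m -> 'rV[R]_n -> 'rV[R]_n.
Hypothesis hxf : forall y z, X (xf y z) /\
     forall x, X x -> f (xf y z) y + p / 2 * enorm (xf y z - z) ^+ 2
                      <= f x y + p / 2 * enorm (x - z) ^+ 2.

Let mu := p - L.
Let K (x z : 'rV[R]_n) (y : 'rV[R]_m) := f x y + p / 2 * enorm (x - z) ^+ 2.

Lemma mu_gt0 : 0 < mu.
Proof. by rewrite /mu subr_gt0. Qed.

Lemma DL a b y : f a y + dotv (gx a y) (b - a) - L / 2 * enorm (b - a) ^+ 2 <= f b y.
Proof.
set v := b - a.
have := @seg_lemma R n (fun x => f x y) (fun x => gx x y) a v (dotv (gx a y) v)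
   (- (L * enorm v ^+ 2)) (fun x => hgx x y).
have -> : a + v = b by rewrite /v addrC subrK.
move=> H.
have E : - (L * enorm v ^+ 2) / 2 = - (L / 2 * enorm v ^+ 2) by rewrite mulNr mulrAC.
suff : f a y + dotv (gx a y) v + - (L * enorm v ^+ 2) / 2 <= f b y by rewrite E.
apply: H => t /andP[t0 t1].
have := dot_lb (gx (a + t *: v) y - gx a y) v.
rewrite dotvBl.
have h1 := hLx1 (a + t *: v) a y.
have E2 : a + t *: v - a = t *: v by rewrite addrC addKr.
move: h1; rewrite E2 enormZ ger0_norm // => h1.
have nv := enorm_ge0 v.
have h2 : enorm (gx (a + t *: v) y - gx a y) * enorm v <= L * (t * enorm v) * enorm v.
  by rewrite ler_wpM2r.
rewrite expr2; nra.
Qed.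

Lemma LIPphi a b y1 y2 :
  (f a y1 - f a y2) - L * enorm (y1 - y2) * enorm (b - a) <= f b y1 - f b y2.
Proof.
set v := b - a.
have := @seg_lemma R n (fun x => f x y1 - f x y2) (fun x => gx x y1 - gx x y2) a v
   (- (L * enorm (y1 - y2) * enorm v)) 0 (fun x => is_gradB (hgx x y1) (hgx x y2)).
have -> : a + v = b by rewrite /v addrC subrK.
rewrite mul0r addr0 => H.
suff : f a y1 - f a y2 + - (L * enorm (y1 - y2) * enorm v) <= f b y1 - f b y2 by [].
apply: H => t _; rewrite mul0r addr0.
have := dot_lb (gx (a + t *: v) y1 - gx (a + t *: v) y2) v.
have := hLx2 (a + t *: v) y1 y2.
have nv := enorm_ge0 v.
move=> h1 h2; have h3 := ler_wpM2r nv h1; lra.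
Qed.

Lemma qg y z x' : X x' ->
  K (xf y z) z y + mu / 2 * enorm (x' - xf y z) ^+ 2 <= K x' z y.
Proof.
move=> Xx'.
set x0 := xf y z; set v := x' - x0.
suff : K x0 z y + mu / 2 * enorm v ^+ 2 - K x' z y <= 0 by lra.
apply: (@small_le0 _ _ (mu / 2 * enorm v ^+ 2)) => t t0 t1.
set xt := t *: x' + (1 - t) *: x0.
have Xxt : X xt by apply: hXcv => //; [exact: (hxf y z).1 | rewrite (ltW t0) (ltW t1)].
have hmin := (hxf y z).2 xt Xxt.
have DL1 := DL xt x' y; have DL2 := DL xt x0 y.
have E1 : x' - xt = (1 - t) *: v by apply/rowP => i; rewrite !mxE; ring.
have E2 : x0 - xt = (- t) *: v by apply/rowP => i; rewrite !mxE; ring.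
rewrite E1 dotvZr enormZ ger0_norm ?subr_ge0 ?(ltW t1) // in DL1.
rewrite E2 dotvZr enormZ normrN ger0_norm ?(ltW t0) // in DL2.
have E3 : xt - z = t *: (x' - z) + (1 - t) *: (x0 - z) by apply/rowP => i; rewrite !mxE; ring.
have E4 : (x' - z) - (x0 - z) = v by rewrite /v opprB addrA subrK.
move: hmin; rewrite -/x0 E3 quad_id E4 => hmin.
rewrite /K.
move: DL1 DL2 hmin.
set Fx := f x' y; set F0 := f x0 y; set Ft := f xt y; set G := dotv _ v.
set N := enorm v; set Q' := enorm (x' - z); set Q0 := enorm (x0 - z).
move=> DL1 DL2 hmin.
have M1 := ler_wpM2l (ltW t0) DL1.
have M2 : (1 - t) * (Ft + - t * G - L / 2 * (t * N) ^+ 2) <= (1 - t) * F0.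
  by rewrite ler_wpM2l // subr_ge0 ltW.
have : t * (F0 + p / 2 * Q0 ^+ 2 + mu / 2 * N ^+ 2 - (Fx + p / 2 * Q' ^+ 2))
       <= t * (t * (mu / 2 * N ^+ 2)).
  rewrite /mu; nra.
by rewrite ler_pM2l.
Qed.

Lemma xlip y1 y2 z : mu * enorm (xf y1 z - xf y2 z) <= L * enorm (y1 - y2).
Proof.
set x1 := xf y1 z; set x2 := xf y2 z.
have q1 := qg y1 z (hxf y2 z).1; have q2 := qg y2 z (hxf y1 z).1.
have ph := LIPphi x2 x1 y1 y2.
move: q1 q2 ph; rewrite /K -/x1 -/x2 (enormB x2 x1).
set D := enorm (x1 - x2); set Dy := enorm (y1 - y2) => q1 q2 ph.
have D0 : 0 <= D by exact: enorm_ge0.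
have Dy0 : 0 <= Dy by exact: enorm_ge0.
have hmu := mu_gt0.
have H : D * (mu * D) <= D * (L * Dy) by nra.
have [Dz|Dp] := eqVneq D 0.
  by rewrite Dz mulr0 mulr_ge0.
by move: H; rewrite ler_pM2l // lt_def Dp D0.
Qed.

Definition gg z y := gy (xf y z) y.

Lemma Glip z y1 y2 :
  enorm (gg z y1 - gg z y2) <= L * enorm (xf y1 z - xf y2 z) + L * enorm (y1 - y2).
Proof.
rewrite /gg.
have -> : gy (xf y1 z) y1 - gy (xf y2 z) y2
  = (gy (xf y1 z) y1 - gy (xf y2 z) y1) + (gy (xf y2 z) y1 - gy (xf y2 z) y2).
  by rewrite addrA subrK.
apply: le_trans (enormD _ _) _; apply: lerD; [exact: hLy1 | exact: hLy2].
Qed.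

Lemma Glip2 z y1 y2 :
  mu * enorm (gg z y1 - gg z y2) <= (L * L + mu * L) * enorm (y1 - y2).
Proof.
have h1 := Glip z y1 y2; have h2 := xlip y1 y2 z; have hmu := mu_gt0.
have h3 := ler_wpM2l (ltW hmu) h1.
have h4 := ler_wpM2l hL0 h2.
have := enorm_ge0 (y1 - y2); nra.
Qed.

Let d y z := K (xf y z) z y.

Lemma SG y y' z : d y' z <= d y z + dotv (gg z y) (y' - y).
Proof.
have h1 := concave_tangent y' (hconc (xf y z)) (hgy (xf y z) y).
have h2 := (hxf y' z).2 (xf y z) (hxf y z).1.
rewrite /d /K /gg; lra.
Qed.

Lemma dcont z : continuous (fun y => d y z).
Proof.
move=> y0; apply/(@cvgrPdist_le _ _ _ (nbhs y0)) => e e0.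
set G0 := enorm (gg z y0).
set C := (L * L + mu * L) / mu.
have hmu := mu_gt0.
have C1 : 0 <= L * L + mu * L by rewrite addr_ge0 // mulr_ge0 // ltW.
have C0 : 0 <= C by rewrite /C divr_ge0 // ltW.
have G00 : 0 <= G0 by exact: enorm_ge0.
set del := Num.min 1 (e / (G0 + C + 1)).
have del0 : 0 < del by rewrite lt_min ltr01 divr_gt0 //; lra.
have del1 : del <= 1 by rewrite ge_min lexx.
have del2 : del * (G0 + C + 1) <= e.
  rewrite -ler_pdivlMr; last lra.
  by rewrite ge_min lexx orbT.
have dm0 : 0 < del / m.+1%:R by rewrite divr_gt0.
near=> y.
have hy : `|y0 - y| < del / m.+1%:R by near: y; exact: nearn.
have hn : enorm (y - y0) < del.
  apply: le_lt_trans (enorm_le_norm _) _.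
  by rewrite -ltr_pdivlMl // mulrC -normrN opprB.
set D := enorm (y - y0).
have D0 : 0 <= D by exact: enorm_ge0.
have s1 := SG y0 y z; have s2 := SG y y0 z.
have c1 := cs (gg z y0) (y - y0).
have E : dotv (gg z y) (y0 - y) = dotv (gg z y0) (y0 - y) + dotv (gg z y - gg z y0) (y0 - y).
  by rewrite dotvBl addrCA subrr addr0.
have c2 := cs (gg z y0) (y0 - y).
have c3 := cs (gg z y - gg z y0) (y0 - y).
rewrite (enormB y0 y) -/D in c2 c3.
have g2 := Glip2 z y y0.
have g3 : enorm (gg z y - gg z y0) <= C * D.
  by rewrite /C mulrAC ler_pdivlMr // mulrC -/D.
have g4 : enorm (gg z y - gg z y0) * D <= C * D * D by rewrite ler_wpM2r.
have D1 : D <= 1 by rewrite /D; lra.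
have CD : 0 <= C * D by rewrite mulr_ge0.
have g5 : C * D * D <= C * D by nra.
have g7 : (G0 + C) * D <= (G0 + C) * del by rewrite ler_wpM2l ?addr_ge0 // ltW.
have g6 : G0 * D + C * D <= e by nra.
rewrite -/G0 -/D in c1 c2.
rewrite ler_norml; apply/andP; split; lra.
Unshelve. all: end_near.
Qed.

Hypothesis hY0 : Y !=set0.
Hypothesis hYcv : convex_set Y.
Hypothesis hYk : compact Y.

Lemma Ymax z : exists2 ys, Y ys & forall y', Y y' -> d y' z <= d ys z.
Proof.
have [c cY H] := EVT_max_rV hY0 hYk (continuous_subspaceT (@dcont z)).
exists c; first by move: cY; rewrite inE.
by move=> y' Yy'; apply: H; rewrite inE.
Qed.

Lemma OC z ys : Y ys -> (forall y', Y y' -> d y' z <= d ys z) ->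
  forall w, Y w -> dotv (gg z ys) (w - ys) <= 0.
Proof.
move=> Yys hmax w Yw.
set v := w - ys.
set C := (L * L + mu * L) / mu.
have hmu := mu_gt0.
have nv := enorm_ge0 v.
apply: (@small_le0 _ _ (C * enorm v ^+ 2)) => t t0 t1.
set yt := t *: w + (1 - t) *: ys.
have Yyt : Y yt by apply: hYcv => //; rewrite (ltW t0) (ltW t1).
have s1 := SG yt ys z.
have E1 : ys - yt = (- t) *: v by apply/rowP => i; rewrite !mxE; ring.
rewrite E1 dotvZr in s1.
have m1 := hmax yt Yyt.
have h1 : t * dotv (gg z yt) v <= 0 by lra.
have h2 : dotv (gg z yt) v <= 0.
  by move: h1; rewrite pmulr_rle0.
have E2 : dotv (gg z ys) v = dotv (gg z yt) v + dotv (gg z ys - gg z yt) v.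
  by rewrite dotvBl addrCA subrr addr0.
have c1 := cs (gg z ys - gg z yt) v.
have g2 := Glip2 z ys yt.
rewrite E1 enormZ normrN ger0_norm ?(ltW t0) // in g2.
have g3 : enorm (gg z ys - gg z yt) <= C * (t * enorm v).
  by rewrite /C mulrAC ler_pdivlMr // mulrC.
have g4 : enorm (gg z ys - gg z yt) * enorm v <= C * (t * enorm v) * enorm v.
  by rewrite ler_wpM2r.
rewrite E2; rewrite expr2; lra.
Qed.

Lemma saddle z ys : Y ys -> (forall y', Y y' -> d y' z <= d ys z) ->
  forall w, Y w -> f (xf ys z) w <= f (xf ys z) ys.
Proof.
move=> Yys hmax w Yw.
have h1 := concave_tangent w (hconc (xf ys z)) (hgy (xf ys z) ys).
have h2 := OC Yys hmax Yw.
rewrite /gg in h2; lra.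
Qed.

Variable xs : 'rV[R]_n -> 'rV[R]_n.
Hypothesis hxs : forall z, X (xs z) /\     forall x, X x -> forall y, Y y -> exists2 y', Y y' &
       f (xs z) y + p / 2 * enorm (xs z - z) ^+ 2
         <= f x y' + p / 2 * enorm (x - z) ^+ 2.

Lemma ident z ys : Y ys -> (forall y', Y y' -> d y' z <= d ys z) -> xs z = xf ys z.
Proof.
move=> Yys hmax.
have [y' Yy' h1] := (hxs z).2 (xf ys z) (hxf ys z).1 ys Yys.
have h2 := saddle Yys hmax Yy'.
have h3 := qg ys z (hxs z).1.
rewrite /K in h3.
have hmu := mu_gt0.
have h4 : mu / 2 * enorm (xs z - xf ys z) ^+ 2 <= 0 by lra.
have h5 : enorm (xs z - xf ys z) ^+ 2 = 0.
  apply/eqP; rewrite eq_le sqr_ge0 andbT.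
  by move: h4; rewrite pmulr_rle0 // divr_gt0.
apply/eqP; rewrite -subr_eq0; apply/eqP; apply: enorm_eq0.
by move/eqP: h5; rewrite sqrf_eq0 => /eqP.
Qed.

Variable PY : 'rV[R]_m -> 'rV[R]_m.
Hypothesis hPY : is_proj Y PY.
Variable alpha : R.
Hypothesis halpha : 0 < alpha.

Lemma mainb z y ys : Y ys -> (forall y', Y y' -> d y' z <= d ys z) ->
  alpha * (p - L) * enorm (xs z - xf (PY (y + alpha *: gy (xf y z) y)) z) ^+ 2
  <= (1 + alpha * L + alpha * L * (2 * (p + L) / (p - L)))
     * enorm (y - PY (y + alpha *: gy (xf y z) y))
     * enorm (PY (y + alpha *: gy (xf y z) y) - ys).
Proof.
move=> Yys hmax.
rewrite -/(gg z y) (ident Yys hmax).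
set yp := PY (y + alpha *: gg z y).
have Yyp : Y yp by exact: (hPY _).1.
set xst := xf ys z; set xp := xf yp z.
have hmu := mu_gt0.
have q1 := qg yp z (hxf ys z).1.
have q2 := qg ys z (hxf yp z).1.
have t1 := concave_tangent yp (hconc xst) (hgy xst ys).
have oc := OC Yys hmax Yyp.
have t2 := concave_tangent ys (hconc xp) (hgy xp yp).
rewrite /K -/xst -/xp in q1 q2.
rewrite /gg -/xst in oc.
rewrite (enormB xp xst) in q2.
set D := enorm (xst - xp).
set w := ys - yp.
have H1 : mu * D ^+ 2 <= dotv (gy xp yp) w.
  rewrite /w; move: q1 q2 t1 t2 oc; rewrite -/D => q1 q2 t1 t2 oc.
  have : mu * D ^+ 2 = mu / 2 * D ^+ 2 + mu / 2 * D ^+ 2 by field.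
  lra.
have E : dotv (gy xp yp) w = dotv (gg z y) w + dotv (gg z yp - gg z y) w.
  by rewrite dotvBl addrCA subrr addr0.
have vi := proj_vi hYcv hPY (y + alpha *: gg z y) Yys.
rewrite -/yp -/w in vi.
have E2 : y + alpha *: gg z y - yp = (y - yp) + alpha *: gg z y.
  by apply/rowP => i; rewrite !mxE; ring.
rewrite E2 dotvDl dotvZl in vi.
set e := enorm (y - yp); set W := enorm w.
have e0 : 0 <= e by exact: enorm_ge0.
have W0 : 0 <= W by exact: enorm_ge0.
have lb := dot_lb (y - yp) w; rewrite -/e -/W in lb.
have c3 := cs (gg z yp - gg z y) w; rewrite -/W in c3.
have gl := Glip z yp y.
have xl := xlip yp y z.
rewrite (enormB yp y) -/e in gl xl.
set D' := enorm (xf yp z - xf y z).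
rewrite -/D' in gl xl.
have D'0 : 0 <= D' by exact: enorm_ge0.
set s2 := 2 * (p + L) / (p - L).
have hs : mu * s2 = 2 * (p + L) by rewrite /s2 /mu; field; rewrite subr_eq0 gt_eqF.
have hD' : D' <= s2 * e.
  have p0 : 0 <= 2 * p + L.
    by rewrite addr_ge0 // mulr_ge0 // ltW // (le_lt_trans hL0 hpL).
  have pe : 0 <= (2 * p + L) * e by exact: mulr_ge0.
  have : mu * D' <= mu * (s2 * e) by rewrite mulrA hs; lra.
  by rewrite ler_pM2l.
have g1 : enorm (gg z yp - gg z y) * W <= (L * D' + L * e) * W by rewrite ler_wpM2r.
have g2 : L * D' * W <= L * (s2 * e) * W.
  by rewrite ler_wpM2r // ler_wpM2l.
have A1 : alpha * (mu * D ^+ 2) <= alpha * dotv (gy xp yp) w by rewrite ler_wpM2l // ltW.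
have A2 : alpha * (L * D' * W) <= alpha * (L * (s2 * e) * W) by rewrite ler_wpM2l // ltW.
have A3 : alpha * dotv (gg z yp - gg z y) w <= alpha * ((L * D' + L * e) * W).
  by rewrite ler_wpM2l ?(ltW halpha) //; lra.
rewrite (enormB yp ys) -/w -/W.
rewrite E in A1.
rewrite -/mu.
have F : (1 + alpha * L + alpha * L * s2) * e * W
   = e * W + alpha * (L * e * W) + alpha * (L * (s2 * e) * W) by ring.
rewrite F.
have F2 : alpha * ((L * D' + L * e) * W) = alpha * (L * D' * W) + alpha * (L * e * W) by ring.
have F3 : alpha * mu * D ^+ 2 = alpha * (mu * D ^+ 2) by ring.
rewrite F3.
have F4 : alpha * (dotv (gg z y) w + dotv (gg z yp - gg z y) w) = alpha * dotv (gg z y) w + alpha * dotv (gg z yp - gg z y) w by ring.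
rewrite F4 in A1.
lra.
Qed.

End Prob.


Unset Implicit Arguments. Set Strict Implicit.

Theorem lemma11 (R : realType) (n m : nat)
  (X : set 'rV[R]_n) (Y : set 'rV[R]_m)
  (f : 'rV[R]_n -> 'rV[R]_m -> R)
  (gx : 'rV[R]_n -> 'rV[R]_m -> 'rV[R]_n)
  (gy : 'rV[R]_n -> 'rV[R]_m -> 'rV[R]_m)
  (L p alpha : R)
  (* standing assumptions *)
  (hX0 : X !=set0) (hXc : closed X) (hXcv : convex_set X)
  (hY0 : Y !=set0) (hYc : closed Y) (hYcv : convex_set Y) (hYk : compact Y)
  (hgx : forall x y, is_grad (fun x' => f x' y) x (gx x y))
  (hgy : forall x y, is_grad (fun y' => f x y') y (gy x y))
  (hgcont : forall x y (e : R), 0 < e -> exists2 del : R, 0 < del &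
      forall x' y', enorm (x' - x) < del -> enorm (y' - y) < del ->
        enorm (gx x' y' - gx x y) < e /\ enorm (gy x' y' - gy x y) < e)
  (hconc : forall x, concave_on setT (f x))
  (hLx1 : forall x x' y, enorm (gx x y - gx x' y) <= L * enorm (x - x'))
  (hLx2 : forall x y y', enorm (gx x y - gx x y') <= L * enorm (y - y'))
  (hLy1 : forall x x' y, enorm (gy x y - gy x' y) <= L * enorm (x - x'))
  (hLy2 : forall x y y', enorm (gy x y - gy x y') <= L * enorm (y - y'))
  (hlb : exists c : R, forall x, X x -> exists2 y, Y y & c <= f x y)
  (* parameters *)
  (hpL : L < p) (halpha : 0 < alpha)
  (* the objects of the context *)
  (PY : 'rV[R]_m -> 'rV[R]_m) (hPY : is_proj Y PY)
  (xf : 'rV[R]_m -> 'rV[R]_n -> 'rV[R]_n)   (* x(y,z) *)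
  (hxf : forall y z, X (xf y z) /\
     forall x, X x -> f (xf y z) y + p / 2 * enorm (xf y z - z) ^+ 2
                      <= f x y + p / 2 * enorm (x - z) ^+ 2)
  (xs : 'rV[R]_n -> 'rV[R]_n)               (* x^*(z) *)
  (hxs : forall z, X (xs z) /\
     forall x, X x -> forall y, Y y -> exists2 y', Y y' &
       f (xs z) y + p / 2 * enorm (xs z - z) ^+ 2
         <= f x y' + p / 2 * enorm (x - z) ^+ 2) :
  let K (x z : 'rV[R]_n) (y : 'rV[R]_m) := f x y + p / 2 * enorm (x - z) ^+ 2 in
  let d y z := K (xf y z) z y in
  let Yz z := [set y | Y y /\ forall y', Y y' -> d y' z <= d y z] in
  let sigma2 := 2 * (p + L) / (p - L) in
  forall y z, Y y ->
  let yp := PY (y + alpha *: gy (xf y z) y) in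
  alpha * (p - L) * enorm (xs z - xf yp z) ^+ 2
    <= (1 + alpha * L + alpha * L * sigma2) * enorm (y - yp) * set_dist yp (Yz z)
  /\ (1 + alpha * L + alpha * L * sigma2) * enorm (y - yp) * set_dist yp (Yz z)
    <= (1 + alpha * L + alpha * L * sigma2) * enorm (y - yp) * set_diam Y.
Proof.
move=> K d Yz sigma2 y z hy yp.
case: (ltrP L 0) => hL.
  have zx : forall a b : 'rV[R]_n, enorm (a - b) = 0.
    move=> a b; have h := hLx1 a b 0; have h0 := enorm_ge0 (gx a 0 - gx b 0).
    have h1 := enorm_ge0 (a - b).
    apply/eqP; rewrite eq_le h1 andbT; nra.
  have zy : forall a b : 'rV[R]_m, enorm (a - b) = 0.
    move=> a b; have h := hLx2 0 a b; have h0 := enorm_ge0 (gx 0 a - gx 0 b).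
    have h1 := enorm_ge0 (a - b).
    apply/eqP; rewrite eq_le h1 andbT; nra.
  rewrite zx zy !mulr0 !mul0r expr0n /= mulr0; split; exact: lexx.
have [ys Yys hmax] : exists2 ys, Y ys & forall y', Y y' -> d y' z <= d ys z.
  by apply: Ymax; eassumption.
have B : forall w, Yz z w -> alpha * (p - L) * enorm (xs z - xf yp z) ^+ 2
    <= (1 + alpha * L + alpha * L * sigma2) * enorm (y - yp) * enorm (yp - w).
  move=> w [Yw hw]; eapply mainb; eassumption.
have s20 : 0 <= sigma2.
  rewrite /sigma2 divr_ge0 // ?subr_ge0 ?(ltW hpL) // mulr_ge0 // addr_ge0 //.
  exact: (le_trans hL (ltW hpL)).
have C0 : 0 <= 1 + alpha * L + alpha * L * sigma2.
  have aL : 0 <= alpha * L by rewrite mulr_ge0 // ltW.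
  by rewrite !addr_ge0 // mulr_ge0.
move: B; set C := 1 + alpha * L + alpha * L * sigma2 => B.
set e := enorm (y - yp).
have e0 : 0 <= e by exact: enorm_ge0.
have Ce0 : 0 <= C * e by exact: mulr_ge0.
rewrite /set_dist.
set S := [set enorm (yp - w) | w in Yz z].
have Sne : S !=set0 by exists (enorm (yp - ys)); exists ys.
have Slb : has_lbound S.
  by exists 0 => r [w _ <-]; exact: enorm_ge0.
split.
  have [Cz|Cp] := eqVneq (C * e) 0.
    rewrite Cz mul0r; have := B ys (conj Yys hmax); rewrite Cz mul0r //.
  have Cp' : 0 < C * e by rewrite lt_def Cp Ce0.
  rewrite -ler_pdivrMl //; apply: lb_le_inf => // r [w hw <-].
  by rewrite ler_pdivrMl //; exact: B.
apply: ler_wpM2l => //.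
apply: (le_trans (y := enorm (yp - ys))).
  by apply: (ge_inf Slb); exists ys.
have Yyp : Y yp by exact: (hPY _).1.
rewrite /set_diam.
set T := [set r : R | exists a b, [/\ Y a, Y b & r = enorm (a - b)]].
have [c cY Hc] := EVT_max_rV hY0 hYk (continuous_subspaceT (@enorm_cont R m)).
have hT : has_sup T.
  split; first by exists (enorm (yp - ys)); exists yp, ys.
  exists (enorm c + enorm c) => r [a [b [Ya Yb ->]]].
  apply: le_trans (enormD _ _) _; rewrite enormN.
  by apply: lerD; apply: Hc; rewrite inE.
by apply: (sup_upper_bound hT); exists yp, ys.
Qed.
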